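(* Let $f:\{0,1\}^n\to\{0,1\}^m$ be a Boolean function and let $r$ be the dimension of the affine span of $\operatorname{img}(f)$ in $\mathbb{F}_2^m$. Then $f$ is fully balanced if and only if $b(f)=2^r-1$.
   Context: Strings in $\{0,1\}^k$ are identified with vectors of $\mathbb{F}_2^k$; $\mathbf{a}\cdot\mathbf{b}=\bigoplus_i a_ib_i$ (mod 2). $f$ is $\mathbf{y}$-balanced if $f(\mathbf{x})\cdot\mathbf{y}=0$ for exactly half of the $\mathbf{x}\in\{0,1\}^n$ and $=1$ for the other half, and $\mathbf{y}$-constant if $f(\mathbf{x})\cdot\mathbf{y}$ is the same for all $\mathbf{x}$. $f$ is fully balanced if for every $\mathbf{y}\in\{0,1\}^m$ it is either $\mathbf{y}$-balanced or $\mathbf{y}$-constant. $C(f)=\{\mathbf{y}: f\text{ is }\mathbf{y}\text{-constant}\}$, $B(f)=\{\mathbf{y}: f\text{ is }\mathbf{y}\text{-balanced}\}$, and $b(f)=\#B(f)/\#C(f)$. *)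

(* Defs.v *)
From HB Require Import structures.
From mathcomp Require Import all_boot all_order all_algebra.
Set Implicit Arguments. Unset Strict Implicit. Unset Printing Implicit Defensive.
Import GRing.Theory.
Local Open Scope ring_scope.

Notation bits k := 'rV['F_2]_k.

Definition dotF2 (k : nat) (a b : bits k) : 'F_2 := \sum_(i < k) a 0 i * b 0 i.

Definition y_balanced (n m : nat) (f : bits n -> bits m) (y : bits m) : bool :=
  (2 * #|[set x : bits n | dotF2 (f x) y == (0%R : 'F_2)]| == 2 ^ n)%N &&
  (2 * #|[set x : bits n | dotF2 (f x) y == (1%R : 'F_2)]| == 2 ^ n)%N.

Definition y_constant (n m : nat) (f : bits n -> bits m) (y : bits m) : bool :=
  [exists c : 'F_2, [forall x : bits n, dotF2 (f x) y == c]].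

Definition fully_balanced (n m : nat) (f : bits n -> bits m) : Prop :=
  forall y : bits m, y_balanced f y || y_constant f y.

Definition Cset (n m : nat) (f : bits n -> bits m) : {set bits m} :=
  [set y | y_constant f y].
Definition Bset (n m : nat) (f : bits n -> bits m) : {set bits m} :=
  [set y | y_balanced f y].

Definition bratio (n m : nat) (f : bits n -> bits m) : rat :=
  (#|Bset f|)%:R / (#|Cset f|)%:R.

(* dimension of the affine span of img f: the dimension of its direction
   space, i.e. the linear span of all differences a - b with a, b in img f *)
Definition affine_span_dim (n m : nat) (f : bits n -> bits m) : nat :=
  \dim <<[seq a - b | a <- codom f, b <- codom f]>>%VS.

(* Main.v *)
Require Import Defs.
From HB Require Import structures.
From mathcomp Require Import all_boot all_order all_algebra all_field mxabelem.
Import Num.Theory.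
Set Implicit Arguments. Unset Strict Implicit. Unset Printing Implicit Defensive.
Import GRing.Theory.
Local Open Scope ring_scope.

Section S.
Variable m : nat.
Variable s : seq (bits m).
Let A : 'M['F_2]_(size s, m) := \matrix_(i < size s) s`_i.

Lemma memD x : (x \in <<s>>%VS) = (x <= A)%MS.
Proof.
apply/idP/idP.
  move=> xs. have xs2 : x \in <<in_tuple s>>%VS by []. rewrite (coord_span xs2).
  apply: summx_sub => i _. apply: scalemx_sub.
  have -> : (in_tuple s)`_i = row i A by rewrite rowK.
  exact: row_sub.
move/submxP=> [c ->]. rewrite mulmx_sum_row.
apply: memv_suml => i _; apply: memvZ; rewrite rowK; apply: memv_span.
exact: mem_nth.
Qed.

Lemma dimrank : \dim <<s>>%VS = \rank A.
Proof.
have h1 := card_vspace <<s>>%VS.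
have h2 := card_rowg A.
have e : #|<<s>>%VS| = #|rowg A|.
  by apply: eq_card => x; rewrite mem_rowg -memD.
rewrite e h2 card_Fp // in h1.
by apply/eqP; rewrite -(eqn_exp2l _ _ (isT : 1 < 2)%N) h1.
Qed.
End S.

Lemma dot_subl k (a b y : bits k) : dotF2 (a - b) y = dotF2 a y - dotF2 b y.
Proof. by rewrite /dotF2 -sumrB; apply: eq_bigr => i _; rewrite !mxE mulrBl. Qed.

Lemma F2_cases (c : 'F_2) : c = 0 \/ c = 1.
Proof. by case: c => [[|[|k]]] //= Hk; [left|right]; apply/val_inj. Qed.

Lemma card_bits k : #|[set: bits k]| = (2 ^ k)%N.
Proof. by rewrite cardsT card_mx card_Fp // mul1n. Qed.

Section Main.
Variables (n m : nat) (f : bits n -> bits m).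
Let S := [seq a - b | a <- codom f, b <- codom f].
Let A : 'M['F_2]_(size S, m) := \matrix_(i < size S) S`_i.

Lemma Cchar y : (y \in Cset f) = (y <= kermx A^T)%MS.
Proof.
have key : (y *m A^T == 0) = [forall i : 'I_(size S), dotF2 S`_i y == 0].
  apply/eqP/forallP => [H i | H].
    move/rowP: H => /(_ i); rewrite !mxE => E; rewrite -E.
    by apply/eqP; rewrite /dotF2; apply: eq_bigr => j _; rewrite !mxE mulrC.
  apply/rowP => i; rewrite !mxE; transitivity (dotF2 S`_i y); last exact/eqP.
  by rewrite /dotF2; apply: eq_bigr => j _; rewrite !mxE mulrC.
have -> : (y <= kermx A^T)%MS = (y *m A^T == 0) by apply/sub_kermxP/eqP.
rewrite key inE /y_constant.
apply/existsP/forallP => [[c /forallP Hc] i | H].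
  have : S`_i \in S by apply: mem_nth.
  case/allpairsP => [[a b] /= [/codomP [x1 ->] /codomP [x2 ->] ->]].
  by rewrite dot_subl (eqP (Hc x1)) (eqP (Hc x2)) subrr.
exists (dotF2 (f 0) y); apply/forallP => x.
have hs : f x - f 0 \in S by apply/allpairsP; exists (f x, f 0); rewrite /= !codom_f.
have hi : (index (f x - f 0)%R S < size S)%N by rewrite index_mem.
have := H (Ordinal hi).
by rewrite /= nth_index // dot_subl subr_eq0.
Qed.

Lemma cardC : #|Cset f| = (2 ^ (m - affine_span_dim f))%N.
Proof.
have -> : affine_span_dim f = \rank A by rewrite /affine_span_dim dimrank.
have -> : #|Cset f| = #|rowg (kermx A^T)|.
  by apply: eq_card => y; rewrite mem_rowg -Cchar.
by rewrite card_rowg card_Fp // mxrank_ker mxrank_tr.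
Qed.

Lemma r_le : (affine_span_dim f <= m)%N.
Proof. by rewrite /affine_span_dim dimrank rank_leq_col. Qed.

Lemma disj y : y_balanced f y -> ~~ y_constant f y.
Proof.
case/andP=> [h0 h1]; apply/negP => /existsP [c /forallP Hc].
have hT : forall d : 'F_2, d = c -> #|[set x : bits n | dotF2 (f x) y == d]| = (2 ^ n)%N.
  move=> d ->; rewrite -card_bits; apply: eq_card => x; by rewrite !inE Hc.
have pos : (0 < 2 ^ n)%N by rewrite expn_gt0.
case: (F2_cases c) => ec.
  by move: h0; rewrite (hT 0 (esym ec)) -{2}(mul1n (2 ^ n)%N) eqn_pmul2r.
by move: h1; rewrite (hT 1 (esym ec)) -{2}(mul1n (2 ^ n)%N) eqn_pmul2r.
Qed.
End Main.

Theorem mainTheorem6 (n m : nat) (f : bits n -> bits m) :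
  fully_balanced f <-> bratio f = (2 ^ affine_span_dim f - 1)%N%:R.
Proof.
set r := affine_span_dim f.
have Bsub : Bset f \subset ~: Cset f.
  by apply/subsetP => y; rewrite !inE => /disj.
have cC : #|~: Cset f| = ((2 ^ r - 1) * 2 ^ (m - r))%N.
  have h := cardsC (Cset f).
  have hT : #|[set: bits m]| = (2 ^ m)%N by apply: card_bits.
  rewrite cardsT in hT; rewrite hT cardC in h.
  have e : (2 ^ m = 2 ^ r * 2 ^ (m - r))%N by rewrite -expnD subnKC // r_le.
  by rewrite mulnBl mul1n -e -h addKn.
have nz : ((2 ^ (m - r))%:R != 0 :> rat) by rewrite pnatr_eq0 -lt0n expn_gt0.
apply: (@iff_trans _ (Bset f = ~: Cset f)).

  split=> [FB | E y].
    apply/setP => y; rewrite in_setC !inE; move: (FB y) (@disj _ _ f y).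
    by case: (y_balanced f y); case: (y_constant f y) => // _ /(_ isT).
  have : (y \in Bset f) = (y \in ~: Cset f) by rewrite E.
  rewrite in_setC !inE => ->.
  by case: (y_constant f y).
apply: (@iff_trans _ (#|Bset f| = #|~: Cset f|)).

  split=> [-> // | h]; apply/eqP; rewrite eqEcard Bsub h leqnn.
  done.
rewrite /bratio cC cardC -/r.
split=> [-> | h]; first by rewrite natrM mulfK.
apply/eqP; rewrite -(eqr_nat rat) natrM -h divfK //.
Qed.
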